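(* Let $\mathcal F=(F,\rightarrowtail)$ be an argumentation framework. If $A\subseteq F$ is tenable, then $A$ is contained in some weakly complete extension of $\mathcal F$.
   Context: An argumentation framework (AF) $\mathcal F=(F,\rightarrowtail)$ consists of a (possibly infinite) set $F$ of arguments and a binary attack relation $\rightarrowtail\subseteq F\times F$. An argument $a$ attacks a set $B$ if $a\rightarrowtail b$ for some $b\in B$. $A^+=\{x\in F:\exists a\in A,\ a\rightarrowtail x\}$. A set is conflict-free if none of its elements attacks one of its elements. For $A,B\subseteq F$, $A$ is as cogent as $B$, written $A\succeq B$, if $A$ is conflict-free and every $b\in B$ that attacks $A$ belongs to $A^+$. We write $B\succ A$ if $B\succeq A$ and not $A\succeq B$. Tenability game: a tenability dispute on $\mathcal F$ is a finite sequence $(X_0,\dots,X_n)$ of subsets of $F$, where even-indexed sets are moves of the Proponent (Pro) and odd-indexed sets are moves of the Opponent (Opp), such that (1) each $X_i$ is conflict-free; (2) $X_i\subseteq X_{i+2}$ whenever both are defined; (3) $X_1$ and each $X_{i+2}\setminus X_i$ are finite; (4) $X_{i+1}\succeq X_i$ for every $i$; (5) every Opp move satisfies $X_{2k+1}\succ X_{2k}$. Play starts with $X_0=A$ and players alternately extend the sequence so that it remains a tenability dispute. A dispute is concluded if it has no legal extension; a concluded dispute is won by the player who made its last move. A strategy for Pro assigns to each dispute ending with an Opp move a legal Pro reply; it is winning if every concluded dispute starting with $X_0=A$ in which Pro follows it is won by Pro (infinite plays count as wins for Pro). $A$ is tenable if Pro has a winning strategy starting with $X_0=A$. A weakly complete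 labeling is a map $L:F\to\{\mathtt{in},\mathtt{out},\mathtt{undec}\}$ such that for every $a\in F$: if $L(a)=\mathtt{in}$ then no attacker of $a$ is labeled $\mathtt{in}$; if $L(a)=\mathtt{out}$ then some attacker of $a$ is labeled $\mathtt{in}$; if $L(a)=\mathtt{undec}$ then some attacker of $a$ is labeled $\mathtt{undec}$ and no attacker of $a$ is labeled $\mathtt{in}$. A set is a weakly complete extension if it equals $\{a:L(a)=\mathtt{in}\}$ for some weakly complete labeling $L$. *)

(* Defs.v *)
From Stdlib Require Import List Arith.
Import ListNotations.

Section AF.
Context {T : Type} (att : T -> T -> Prop).

Definition set := T -> Prop.
Definition subset (A B : set) : Prop := forall x, A x -> B x.
Definition finite_set (A : set) : Prop := exists l : list T, forall x, A x -> In x l.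

Definition attacks_set (a : T) (B : set) : Prop := exists b, B b /\ att a b.
Definition plus (A : set) : set := fun x => exists a, A a /\ att a x.
Definition conflict_free (A : set) : Prop := forall a b, A a -> A b -> ~ att a b.

Definition cogent (A B : set) : Prop :=
  conflict_free A /\ forall b, B b -> attacks_set b A -> plus A b.
Definition strictly_cogent (B A : set) : Prop := cogent B A /\ ~ cogent A B.

Definition emptyset : set := fun _ => False.
Definition nthX (d : list set) (i : nat) : set := nth i d emptyset.

(* tenability dispute (X_0, ..., X_n) represented as the list [X_0; ...; X_n] *)
Definition is_dispute (d : list set) : Prop :=
  d <> [] /\
  (forall i, i < length d -> conflict_free (nthX d i)) /\
  (forall i, i + 2 < length d -> subset (nthX d i) (nthX d (i + 2))) /\
  (1 < length d -> finite_set (nthX d 1)) /\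
  (forall i, i + 2 < length d ->
     finite_set (fun x => nthX d (i + 2) x /\ ~ nthX d i x)) /\
  (forall i, i + 1 < length d -> cogent (nthX d (i + 1)) (nthX d i)) /\
  (forall k, 2 * k + 1 < length d ->
     strictly_cogent (nthX d (2 * k + 1)) (nthX d (2 * k))).

Definition starts_with (A : set) (d : list set) : Prop := nthX d 0 = A.

Definition concluded (d : list set) : Prop :=
  is_dispute d /\ forall X, ~ is_dispute (d ++ [X]).

(* the last move X_n is Pro's iff n is even iff length d is odd *)
Definition won_by_Pro (d : list set) : Prop := Nat.odd (length d) = true.

(* Pro strategies: maps a dispute ending with an Opp move to Pro's reply *)
Definition strategy := list set -> set.

Definition follows (s : strategy) (d : list set) : Prop :=
  forall k, 2 * k + 2 < length d -> nthX d (2 * k + 2) = s (firstn (2 * k + 2) d).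

Definition legal_strategy (A : set) (s : strategy) : Prop :=
  forall d, is_dispute d -> starts_with A d -> follows s d ->
    Nat.even (length d) = true -> is_dispute (d ++ [s d]).

Definition winning_strategy (A : set) (s : strategy) : Prop :=
  legal_strategy A s /\
  forall d, concluded d -> starts_with A d -> follows s d -> won_by_Pro d.

Definition tenable (A : set) : Prop :=
  is_dispute [A] /\ exists s, winning_strategy A s.

Inductive label := lin | lout | lundec.

Definition weakly_complete_labeling (L : T -> label) : Prop :=
  forall a,
    (L a = lin -> forall b, att b a -> L b <> lin) /\
    (L a = lout -> exists b, att b a /\ L b = lin) /\
    (L a = lundec -> (exists b, att b a /\ L b = lundec) /\
                     (forall b, att b a -> L b <> lin)).

Definition weakly_complete_extension (E : set) : Prop :=
  exists L, weakly_complete_labeling L /\ forall a, E a <-> L a = lin.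

End AF.

(* Main.v *)
Require Import Defs.
From Stdlib Require Import List Arith Lia Classical ClassicalEpsilon.
Import ListNotations.

Lemma nthX_app1 {T : Type} (d : list (@set T)) X i :
  i < length d -> nthX (d ++ [X]) i = nthX d i.
Proof. intro H; unfold nthX; apply app_nth1; exact H. Qed.

Lemma nthX_app2 {T : Type} (d : list (@set T)) X :
  nthX (d ++ [X]) (length d) = X.
Proof. unfold nthX; rewrite app_nth2 by lia; rewrite Nat.sub_diag; reflexivity. Qed.

Lemma snoc_dispute {T : Type} (att : T -> T -> Prop) d X :
  is_dispute att d -> conflict_free att X ->
  (2 <= length d -> subset (nthX d (length d - 2)) X) ->
  (length d = 1 -> finite_set X) ->
  (2 <= length d -> finite_set (fun t => X t /\ ~ nthX d (length d - 2) t)) ->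
  cogent att X (nthX d (length d - 1)) ->
  (forall k, 2*k+1 = length d -> strictly_cogent att X (nthX d (2*k))) ->
  is_dispute att (d ++ [X]).
Proof.
  intros [Hne [Hcf [Hsub [Hf1 [Hfi [Hco Hst]]]]]] HcfX HsubX Hf1X HfiX HcoX HstX.
  assert (Hl : length (d ++ [X]) = length d + 1) by (rewrite length_app; reflexivity).
  assert (Hd : length d <> 0) by (destruct d; [congruence | simpl; lia]).
  split; [| split; [| split; [| split; [| split; [| split]]]]]; rewrite ?Hl.
  - destruct d; [congruence | discriminate].
  - intros i Hi. destruct (Nat.eq_dec i (length d)) as [->|Hne'].
    + rewrite nthX_app2; exact HcfX.
    + rewrite nthX_app1 by lia; apply Hcf; lia.
  - intros i Hi. destruct (Nat.eq_dec (i+2) (length d)) as [He|Hne'].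
    + rewrite He, nthX_app2, nthX_app1 by lia.
      replace i with (length d - 2) by lia. apply HsubX; lia.
    + rewrite !nthX_app1 by lia; apply Hsub; lia.
  - intros Hi. destruct (Nat.eq_dec 1 (length d)) as [He|Hne'].
    + rewrite He, nthX_app2. apply Hf1X; lia.
    + rewrite nthX_app1 by lia; apply Hf1; lia.
  - intros i Hi. destruct (Nat.eq_dec (i+2) (length d)) as [He|Hne'].
    + rewrite He, nthX_app2, nthX_app1 by lia.
      replace i with (length d - 2) by lia. apply HfiX; lia.
    + rewrite !nthX_app1 by lia; apply Hfi; lia.
  - intros i Hi. destruct (Nat.eq_dec (i+1) (length d)) as [He|Hne'].
    + rewrite He, nthX_app2, nthX_app1 by lia.
      replace i with (length d - 1) by lia. exact HcoX.
    + rewrite !nthX_app1 by lia; apply Hco; lia.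
  - intros k Hk. destruct (Nat.eq_dec (2*k+1) (length d)) as [He|Hne'].
    + rewrite He, nthX_app2, nthX_app1 by lia. apply HstX; lia.
    + rewrite !nthX_app1 by lia; apply Hst; lia.
Qed.

Lemma disp_A_sub {T : Type} (att : T -> T -> Prop) d :
  is_dispute att d -> forall m, 2*m < length d -> subset (nthX d 0) (nthX d (2*m)).
Proof.
  intros Hd m. induction m as [|m IH]; intros Hm.
  - intros t Ht; exact Ht.
  - destruct Hd as [_ [_ [Hsub _]]].
    intros t Ht. replace (2 * S m) with (2*m+2) by lia.
    apply Hsub; [lia|]. apply IH; [lia|exact Ht].
Qed.

Lemma disp_fin {T : Type} (att : T -> T -> Prop) d :
  is_dispute att d -> forall m, 2*m < length d ->
  finite_set (fun t => nthX d (2*m) t /\ ~ nthX d 0 t).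
Proof.
  intros Hd m. induction m as [|m IH]; intros Hm.
  - exists []. intros t [H1 H2]. simpl in H1. contradiction.
  - destruct IH as [l2 Hl2]; [lia|].
    destruct Hd as [_ [_ [_ [_ [Hfi _]]]]].
    destruct (Hfi (2*m)) as [l1 Hl1]; [lia|].
    exists (l1 ++ l2). intros t [H1 H2].
    replace (2 * S m) with (2*m+2) in H1 by lia.
    apply in_or_app. destruct (classic (nthX d (2*m) t)) as [Hc|Hc].
    + right; apply Hl2; split; assumption.
    + left; apply Hl1; split; assumption.
Qed.

Lemma follows_snoc {T : Type} (s : @strategy T) d X :
  follows s d -> (forall k, 2*k+2 = length d -> X = s d) -> follows s (d ++ [X]).
Proof.
  intros Hf HX k Hk. rewrite length_app in Hk; simpl in Hk.
  destruct (Nat.eq_dec (2*k+2) (length d)) as [He|Hne].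
  - rewrite He, nthX_app2. rewrite firstn_app, Nat.sub_diag, firstn_all. simpl.
    rewrite app_nil_r. apply (HX k); lia.
  - rewrite nthX_app1 by lia. rewrite firstn_app.
    replace (2*k+2 - length d) with 0 by lia. simpl. rewrite app_nil_r. apply Hf; lia.
Qed.

Definition bad {T : Type} (att : T -> T -> Prop) (E : @set T) (x : T) : Prop :=
  ~ E x /\ ~ plus att E x /\ forall p, att p x -> plus att E p.

Inductive InG {T : Type} (att : T -> T -> Prop) (A E : @set T) : T -> Prop :=
| ing : forall y, (forall p, att p y -> exists z, att z p /\ (A z \/ (E z /\ InG att A E z))) ->
        InG att A E y.

Definition InG_ind2 {T : Type} (att : T -> T -> Prop) (A E : @set T) (P : T -> Prop)
  (step : forall y, (forall p, att p y -> exists z, att z p /\ (A z \/ (E z /\ InG att A E z /\ P z))) -> P y) :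
  forall y, InG att A E y -> P y :=
  fix F y (H : InG att A E y) {struct H} : P y :=
  match H with
  | ing _ _ _ y h => step y (fun p hp =>
      match h p hp with
      | ex_intro _ z (conj hz hor) =>
          ex_intro _ z (conj hz
            (match hor with
             | or_introl ha => or_introl ha
             | or_intror (conj he hi) => or_intror (conj he (conj hi (F z hi)))
             end))
      end)
  end.

Lemma InG_mono {T : Type} (att : T -> T -> Prop) (A E F : @set T) :
  subset E F -> forall y, InG att A E y -> InG att A F y.
Proof.
  intros HEF. apply (InG_ind2 att A E (InG att A F)). intros y H. constructor. intros p hp.
  destruct (H p hp) as [z [hz [ha | [he [hi hp']]]]].
  - exists z; auto.
  - exists z; split; [exact hz| right; split; [apply HEF; exact he | exact hp']].
Qed.

Definition pool {T : Type} (A E : @set T) (x : T) : @set T :=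
  fun t => (E t /\ ~ A t) \/ t = x.

Lemma defenders {T : Type} (att : T -> T -> Prop) (P Q : T -> Prop) (l : list T) :
  (forall b, In b l -> Q b -> exists z, P z /\ att z b) ->
  exists l', (forall z, In z l' -> P z) /\
    forall b, In b l -> Q b -> exists z, In z l' /\ att z b.
Proof.
  induction l as [|b0 l IH]; intros H.
  - exists []. split; [intros z []|intros b []].
  - destruct IH as [l' [H1 H2]]. { intros b Hb Hq. apply H; [right; exact Hb|exact Hq]. }
    destruct (classic (Q b0)) as [Hq|Hq].
    + destruct (H b0 (or_introl eq_refl) Hq) as [z [Hz Hzb]].
      exists (z :: l'). split.
      * intros z' [<-|Hz']; [exact Hz| apply H1; exact Hz'].
      * intros b [<-|Hb] Hqb.
        -- exists z; split; [left; reflexivity|exact Hzb].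
        -- destruct (H2 b Hb Hqb) as [z' [Hz' Hz'b]]. exists z'; split; [right; exact Hz'|exact Hz'b].
    + exists l'. split; [exact H1|].
      intros b [<-|Hb] Hqb; [contradiction|]. apply H2; assumption.
Qed.


Lemma key_lemma {T : Type} (att : T -> T -> Prop) (A E : @set T) (x : T) (s : @strategy T) :
  legal_strategy att A s -> is_dispute att [A] ->
  subset A E -> conflict_free att E ->
  (forall y, E y -> ~ A y -> InG att A E y) ->
  bad att E x -> forall a, A a -> ~ att x a.
Proof.
  intros Hleg Hstart HAE HcfE HInv [HxE [HxpE Hxatt]] a0 Ha0 Hxa0.
  set (Pl := pool A E x).
  assert (pool_InG : forall t, Pl t -> InG att A E t).
  { intros t [[Ht Hna]| ->]; [apply HInv; assumption|].
    constructor. intros p hp. destruct (Hxatt p hp) as [z [Hz Hzp]].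
    exists z; split; [exact Hzp|]. destruct (classic (A z)) as [Ha|Ha]; [left; exact Ha|].
    right; split; [exact Hz| apply HInv; assumption]. }
  assert (pool_cf : conflict_free att Pl).
  { intros u v [[Hu Hnu]| ->] [[Hv Hnv]| ->] Huv.
    - exact (HcfE u v Hu Hv Huv).
    - apply HxpE. exists u; split; assumption.
    - destruct (HInv v Hv Hnv) as [v' Hv']. destruct (Hv' x Huv) as [z [Hzx [Hz|[Hz _]]]];
        apply HxpE; exists z; split; try assumption. apply HAE; assumption.
    - apply HxpE. destruct (Hxatt x Huv) as [z [Hz Hzx]]. exists z; split; assumption. }
  assert (A_not_att_pool : forall b t, A b -> Pl t -> ~ att b t).
  { intros b t Hb [[Ht Hnt]| ->] Hbt.
    - exact (HcfE b t (HAE b Hb) Ht Hbt).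
    - apply HxpE. exists b; split; [apply HAE|]; assumption. }
  assert (G : forall y, InG att A E y -> Pl y -> forall m d, is_dispute att d -> starts_with A d ->
     follows s d -> length d = 2*m+1 ->
     (forall k, 2*k+1 < length d -> subset (nthX d (2*k+1)) Pl) ->
     attacks_set att y (nthX d (2*m)) -> False).
  { apply (InG_ind2 att A E (fun y => Pl y -> forall m d, is_dispute att d -> starts_with A d ->
     follows s d -> length d = 2*m+1 ->
     (forall k, 2*k+1 < length d -> subset (nthX d (2*k+1)) Pl) ->
     attacks_set att y (nthX d (2*m)) -> False)).
    intros y IH Hpy m d Hd Hs Hf Hlen Hopp [b [Hb Hyb]].
    assert (HAX : subset A (nthX d (2*m))).
    { intros t Ht. apply (disp_A_sub att d Hd m); [lia|]. unfold starts_with in Hs; rewrite Hs; exact Ht. }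
    assert (HcfX : conflict_free att (nthX d (2*m))).
    { destruct Hd as [_ [Hcf _]]. apply Hcf; lia. }
    destruct (classic (plus att (nthX d (2*m)) y)) as [[p [Hp Hpy']]|Hnp].
    - destruct (IH p Hpy') as [z [hz [ha | [he [hi hP]]]]].
      + exact (HcfX z p (HAX z ha) Hp hz).
      + assert (Hna : ~ A z) by (intro ha; exact (HcfX z p (HAX z ha) Hp hz)).
        apply (hP (or_introl (conj he Hna)) m d Hd Hs Hf Hlen Hopp). exists p; split; assumption.
    - destruct (disp_fin att d Hd m) as [l Hl]; [lia|].
      unfold starts_with in Hs.
      destruct (defenders att Pl (fun b => nthX d (2*m) b /\ ~ A b /\ exists t, Pl t /\ att b t) l)
        as [Def [HDef1 HDef2]].
      { intros b' _ [Hb' [Hnb' [t [Ht Hbt]]]].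
        destruct (pool_InG t Ht) as [t' Ht']. destruct (Ht' b' Hbt) as [z [hz [ha|[he hi]]]].
        - exfalso; exact (HcfX z b' (HAX z ha) Hb' hz).
        - exists z; split; [|exact hz]. left; split; [exact he|].
          intro ha; exact (HcfX z b' (HAX z ha) Hb' hz). }
      pose (Y' := (fun t => (2 <= length d /\ nthX d (length d - 2) t) \/ t = y \/ In t Def) : @set T).
      assert (HY'pool : subset Y' Pl).
      { intros t [[H2 Ht]|[->|Ht]]; [|exact Hpy|apply HDef1; exact Ht].
        replace (length d - 2) with (2*(m-1)+1) in Ht by lia. apply (Hopp (m-1)); [lia|exact Ht]. }
      assert (HcfY : conflict_free att Y').
      { intros u v Hu Hv. apply pool_cf; apply HY'pool; assumption. }
      assert (cogY : cogent att Y' (nthX d (2*m))).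
      { split; [exact HcfY|]. intros b' Hb' [t [Ht Hbt]].
        assert (Hnb : ~ A b') by (intro Ha; exact (A_not_att_pool b' t Ha (HY'pool t Ht) Hbt)).
        assert (Hin : In b' l) by (apply Hl; split; [exact Hb'| rewrite Hs; exact Hnb]).
        destruct (HDef2 b' Hin) as [z [Hz Hzb]].
        { split; [exact Hb'|split; [exact Hnb|]]. exists t; split; [apply HY'pool; exact Ht|exact Hbt]. }
        exists z; split; [right; right; exact Hz|exact Hzb]. }
      assert (Hfin : finite_set Y' \/ True) by (right; exact I).
      assert (Hd1 : is_dispute att (d ++ [Y'])).
      { apply snoc_dispute.
        - exact Hd.
        - exact HcfY.
        - intros H2 t Ht. left; split; assumption.
        - intros H1. exists (y :: Def). intros t [[H2 _]|[->|Ht]]; [lia|left; reflexivity|right; exact Ht].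
        - intros H2. exists (y :: Def). intros t [[[_ Ht] | [->|Ht]] Hnt]; [contradiction|left; reflexivity|right; exact Ht].
        - replace (length d - 1) with (2*m) by lia. exact cogY.
        - intros k Hk. assert (k = m) by lia. subst k. split; [exact cogY|].
          intros [_ Hc]. apply Hnp. apply Hc; [right; left; reflexivity|]. exists b; split; assumption. }
      assert (Hs1 : starts_with A (d ++ [Y'])).
      { unfold starts_with. rewrite nthX_app1 by lia. exact Hs. }
      assert (Hf1 : follows s (d ++ [Y'])).
      { apply follows_snoc; [exact Hf|]. intros k Hk; lia. }
      assert (Hev : Nat.even (length (d ++ [Y'])) = true).
      { apply Nat.even_spec. exists (m+1). rewrite length_app; simpl; lia. }
      pose proof (Hleg _ Hd1 Hs1 Hf1 Hev) as Hd2.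
      remember (d ++ [Y']) as d1 eqn:Ed1.
      assert (Hl1 : length d1 = 2*m+2) by (subst d1; rewrite length_app; simpl; lia).
      assert (E1 : nthX (d1 ++ [s d1]) (2*m+2) = s d1).
      { rewrite <- Hl1. apply nthX_app2. }
      assert (E2 : nthX (d1 ++ [s d1]) (2*m+1) = Y').
      { rewrite nthX_app1 by lia. subst d1. rewrite <- Hlen. apply nthX_app2. }
      assert (E3 : nthX (d1 ++ [s d1]) (2*m) = nthX d (2*m)).
      { rewrite nthX_app1 by lia. subst d1. rewrite nthX_app1 by lia. reflexivity. }
      assert (Hs2 : starts_with A (d1 ++ [s d1])).
      { unfold starts_with. rewrite nthX_app1 by lia. exact Hs1. }
      assert (Hcf' : conflict_free att (s d1)).
      { destruct Hd2 as [_ [Hcf _]]. rewrite <- E1. apply Hcf. rewrite length_app; simpl; lia. }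
      assert (HAX' : subset A (s d1)).
      { intros t Ht. rewrite <- E1. replace (2*m+2) with (2*(m+1)) by lia.
        apply (disp_A_sub att _ Hd2 (m+1)); [rewrite length_app; simpl; lia|].
        unfold starts_with in Hs2; rewrite Hs2; exact Ht. }
      assert (HXX' : subset (nthX d (2*m)) (s d1)).
      { destruct Hd2 as [_ [_ [Hsub _]]]. rewrite <- E1, <- E3. apply Hsub. rewrite length_app; simpl; lia. }
      assert (Hpl : plus att (s d1) y).
      { destruct Hd2 as [_ [_ [_ [_ [_ [Hco _]]]]]].
        destruct (Hco (2*m+1)) as [_ Hc]; [rewrite length_app; simpl; lia|].
        replace (2*m+1+1) with (2*m+2) in Hc by lia. rewrite E1, E2 in Hc.
        apply Hc; [right; left; reflexivity|]. exists b; split; [apply HXX'; exact Hb|exact Hyb]. }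
      destruct Hpl as [p [Hp Hpy']].
      destruct (IH p Hpy') as [z [hz [ha | [he [hi hP]]]]].
      + exact (Hcf' z p (HAX' z ha) Hp hz).
      + assert (Hna : ~ A z) by (intro ha; exact (Hcf' z p (HAX' z ha) Hp hz)).
        apply (hP (or_introl (conj he Hna)) (m+1) (d1 ++ [s d1]) Hd2 Hs2).
        * apply follows_snoc; [exact Hf1|]. intros; reflexivity.
        * rewrite length_app; simpl; lia.
        * intros k Hk. rewrite length_app in Hk; simpl in Hk.
          destruct (Nat.eq_dec (2*k+1) (2*m+1)) as [He|Hne].
          -- rewrite He, E2. exact HY'pool.
          -- rewrite nthX_app1 by lia. subst d1. rewrite nthX_app1 by lia. apply Hopp; lia.
        * exists p. split; [|exact hz]. replace (2*(m+1)) with (2*m+2) by lia. rewrite E1; exact Hp. }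
  apply (G x (pool_InG x (or_intror eq_refl)) (or_intror eq_refl) 0 [A] Hstart eq_refl).
  - intros k Hk; simpl in Hk; lia.
  - reflexivity.
  - intros k Hk; simpl in Hk; lia.
  - exists a0; split; [exact Ha0|exact Hxa0].
Qed.

Definition fstep {T : Type} (att : T -> T -> Prop) (E : @set T) : @set T :=
  fun t => E t \/ bad att E t.

Inductive Tower {T : Type} (att : T -> T -> Prop) (A : @set T) : @set T -> Prop :=
| tw_base : Tower att A A
| tw_step : forall E, Tower att A E -> Tower att A (fstep att E)
| tw_lim : forall C : @set T -> Prop, (forall E, C E -> Tower att A E) ->
    (forall E F, C E -> C F -> subset E F \/ subset F E) ->
    Tower att A (fun t => A t \/ exists E, C E /\ E t).

Lemma tw_A {T : Type} (att : T -> T -> Prop) (A : @set T) E :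
  Tower att A E -> subset A E.
Proof.
  induction 1; intros t Ht.
  - exact Ht.
  - left; apply IHTower; exact Ht.
  - left; exact Ht.
Qed.

Lemma fstep_infl {T : Type} (att : T -> T -> Prop) E : subset E (fstep att E).
Proof. intros t Ht; left; exact Ht. Qed.

Lemma fstep_ext {T : Type} (att : T -> T -> Prop) E F :
  subset E F -> subset F E -> subset (fstep att E) (fstep att F).
Proof.
  intros H1 H2 t [Ht|[Hn [Hp Ha]]]; [left; apply H1; exact Ht|right].
  split; [intro Hc; apply Hn, H2, Hc|split].
  - intros [a [Ha' Hat]]. apply Hp. exists a; split; [apply H2|]; assumption.
  - intros p hp. destruct (Ha p hp) as [a [Ha' Hat]]. exists a; split; [apply H1|]; assumption.
Qed.

Definition extreme {T : Type} (att : T -> T -> Prop) (A : @set T) (c : @set T) : Prop :=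
  forall x, Tower att A x -> subset x c -> ~ subset c x -> subset (fstep att x) c.

Lemma tw_lemma1 {T : Type} (att : T -> T -> Prop) (A : @set T) c :
  Tower att A c -> extreme att A c -> forall x, Tower att A x -> subset x c \/ subset (fstep att c) x.
Proof.
  intros Htc Hc x Hx. induction Hx as [|x Hx IH|C HC IH Hch].
  - left. exact (tw_A att A c Htc).
  - destruct IH as [H|H].
    + destruct (classic (subset c x)) as [H'|H'].
      * right. apply fstep_ext; assumption.
      * left. apply Hc; assumption.
    + right. intros t Ht. apply fstep_infl, H, Ht.
  - destruct (classic (exists E, C E /\ subset (fstep att c) E)) as [[E [HE H]]|Hn].
    + right. intros t Ht. right. exists E; split; [exact HE| apply H, Ht].
    + left. intros t [Ht|[E [HE Ht]]]; [apply (tw_A att A c Htc); exact Ht|].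
      destruct (IH E HE) as [H|H]; [apply H, Ht|].
      exfalso; apply Hn; exists E; split; assumption.
Qed.

Lemma tw_lemma2 {T : Type} (att : T -> T -> Prop) (A : @set T) c :
  Tower att A c -> extreme att A c.
Proof.
  intros Hc. induction Hc as [|c Hc IH|C HC IH Hch]; intros x Hx H1 H2.
  - exfalso; apply H2, (tw_A att A x Hx).
  - destruct (tw_lemma1 att A c Hc IH x Hx) as [H|H].
    + destruct (classic (subset c x)) as [H'|H'].
      * apply fstep_ext; [exact H| exact H'].
      * intros t Ht. apply fstep_infl. apply (IH x Hx H H' t Ht).
    + exfalso; apply H2, H.
  - destruct (classic (exists t, (exists E, C E /\ E t) /\ ~ x t)) as [[t [[E [HE Ht]] Hnt]]|Hn].
    + destruct (tw_lemma1 att A E (HC E HE) (IH E HE) x Hx) as [H|H].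
      * intros t' Ht'. right. exists E; split; [exact HE|].
        apply (IH E HE x Hx H); [|exact Ht'].
        intro Hc'; apply Hnt, Hc', Ht.
      * exfalso; apply Hnt, H, fstep_infl, Ht.
    + exfalso; apply H2. intros t [Ht|Ht]; [apply (tw_A att A x Hx); exact Ht|].
      apply NNPP; intro Hnt; apply Hn; exists t; split; assumption.
Qed.

Lemma tw_chain {T : Type} (att : T -> T -> Prop) (A : @set T) x c :
  Tower att A x -> Tower att A c -> subset x c \/ subset c x.
Proof.
  intros Hx Hc. destruct (tw_lemma1 att A c Hc (tw_lemma2 att A c Hc) x Hx) as [H|H]; [left; exact H|].
  right. intros t Ht; apply H, fstep_infl, Ht.
Qed.

Lemma tw_inv {T : Type} (att : T -> T -> Prop) (A : @set T) (s : @strategy T) :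
  legal_strategy att A s -> is_dispute att [A] -> forall E, Tower att A E ->
  subset A E /\ conflict_free att E /\ (forall y, E y -> ~ A y -> InG att A E y).
Proof.
  intros Hleg Hst.
  assert (HcfA : conflict_free att A).
  { destruct Hst as [_ [Hcf _]]. apply (Hcf 0). simpl; lia. }
  induction 1 as [|E HE IH|C HC IH Hch].
  - split; [intros t Ht; exact Ht|split; [exact HcfA|]]. intros y Hy Hn; contradiction.
  - destruct IH as [HAE [HcfE HInv]].
    pose proof (key_lemma att A E) as K.
    split; [intros t Ht; left; apply HAE, Ht|split].
    + intros u v [Hu|Hbu] [Hv|Hbv] Huv.
      * exact (HcfE u v Hu Hv Huv).
      * destruct Hbv as [_ [Hpv _]]. apply Hpv; exists u; split; assumption.
      * destruct (classic (A v)) as [Ha|Ha].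
        -- exact (K u s Hleg Hst HAE HcfE HInv Hbu v Ha Huv).
        -- destruct (HInv v Hv Ha) as [v' Hv']. destruct Hbu as [_ [Hpu _]].
           destruct (Hv' u Huv) as [z [Hzu [Hz|[Hz _]]]]; apply Hpu; exists z; split; try assumption.
           apply HAE; assumption.
      * destruct Hbu as [_ [Hpu _]]. destruct Hbv as [_ [_ Hav]]. apply Hpu, Hav, Huv.
    + intros y [Hy|Hby] Hny.
      * apply (InG_mono att A E); [intros t Ht; left; exact Ht|]. apply HInv; assumption.
      * destruct Hby as [_ [_ Hay]]. constructor. intros p hp.
        destruct (Hay p hp) as [z [Hz Hzp]]. exists z; split; [exact Hzp|].
        destruct (classic (A z)) as [Ha|Ha]; [left; exact Ha|right; split].
        -- left; exact Hz.
        -- apply (InG_mono att A E); [intros t Ht; left; exact Ht|]. apply HInv; assumption.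
  - split; [intros t Ht; left; exact Ht|split].
    + intros u v Hu Hv Huv.
      destruct Hu as [Hu|[Eu [HEu Hu]]]; destruct Hv as [Hv|[Ev [HEv Hv]]].
      * exact (HcfA u v Hu Hv Huv).
      * destruct (IH Ev HEv) as [HA [Hcf _]]. exact (Hcf u v (HA u Hu) Hv Huv).
      * destruct (IH Eu HEu) as [HA [Hcf _]]. exact (Hcf u v Hu (HA v Hv) Huv).
      * destruct (Hch Eu Ev HEu HEv) as [H|H].
        -- destruct (IH Ev HEv) as [_ [Hcf _]]. exact (Hcf u v (H u Hu) Hv Huv).
        -- destruct (IH Eu HEu) as [_ [Hcf _]]. exact (Hcf u v Hu (H v Hv) Huv).
    + intros y [Hy|[Ey [HEy Hy]]] Hny; [contradiction|].
      destruct (IH Ey HEy) as [_ [_ HI]].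
      apply (InG_mono att A Ey); [intros t Ht; right; exists Ey; split; assumption|].
      apply HI; assumption.
Qed.

Theorem mainTheorem13 (T : Type) (att : T -> T -> Prop) (A : T -> Prop) :
  tenable att A ->
  exists E : T -> Prop, weakly_complete_extension att E /\ (forall x, A x -> E x).
Proof.
  intros [Hst [s [Hleg _]]].
  pose (U := (fun t => A t \/ exists E, Tower att A E /\ E t) : @set T).
  assert (HU : Tower att A U).
  { apply (tw_lim att A (Tower att A)); [intros E H; exact H|]. intros E F HE HF. exact (tw_chain att A E F HE HF). }
  assert (Hnobad : forall t, ~ bad att U t).
  { intros t Hb. assert (Hf : Tower att A (fstep att U)) by (apply tw_step; exact HU).
    destruct Hb as [Hn Hb']. apply Hn. right. exists (fstep att U). split; [exact Hf|].
    right; split; [exact Hn|exact Hb']. }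
  destruct (tw_inv att A s Hleg Hst U HU) as [HAU [HcfU _]].
  exists U. split; [|exact HAU].
  exists (fun t => if excluded_middle_informative (U t) then lin
                   else if excluded_middle_informative (plus att U t) then lout else lundec).
  split.
  - intros a. split; [|split].
    + destruct (excluded_middle_informative (U a)) as [Ha|Ha]; [|destruct (excluded_middle_informative (plus att U a)); discriminate].
      intros _ b Hba. destruct (excluded_middle_informative (U b)) as [Hb|Hb].
      * exfalso; exact (HcfU b a Hb Ha Hba).
      * destruct (excluded_middle_informative (plus att U b)); discriminate.
    + destruct (excluded_middle_informative (U a)) as [Ha|Ha]; [discriminate|].
      destruct (excluded_middle_informative (plus att U a)) as [Hp|Hp]; [|discriminate].
      intros _. destruct Hp as [b [Hb Hba]]. exists b; split; [exact Hba|].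
      destruct (excluded_middle_informative (U b)); [reflexivity|contradiction].
    + destruct (excluded_middle_informative (U a)) as [Ha|Ha]; [discriminate|].
      destruct (excluded_middle_informative (plus att U a)) as [Hp|Hp]; [discriminate|].
      intros _. split.
      * apply NNPP; intro Hn. apply (Hnobad a). split; [exact Ha|split; [exact Hp|]].
        intros p hp. destruct (excluded_middle_informative (U p)) as [Hu|Hu].
        -- exfalso; apply Hp; exists p; split; assumption.
        -- destruct (excluded_middle_informative (plus att U p)) as [Hq|Hq]; [exact Hq|].
           exfalso; apply Hn; exists p; split; [exact hp|].
           destruct (excluded_middle_informative (U p)); [contradiction|].
           destruct (excluded_middle_informative (plus att U p)); [contradiction|reflexivity].
      * intros b Hba. destruct (excluded_middle_informative (U b)) as [Hb|Hb].
        -- exfalso; apply Hp; exists b; split; assumption.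
        -- destruct (excluded_middle_informative (plus att U b)); discriminate.
  - intros a. destruct (excluded_middle_informative (U a)) as [Ha|Ha]; split; intro H; try exact Ha; try reflexivity.
    + contradiction.
    + destruct (excluded_middle_informative (plus att U a)); discriminate.
Qed.
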